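(* Let $i\in[n]$ and $M_i=\{\beta\in\Phi^+\mid\beta\ge\alpha_i\}$. If $M_i$ is an abelian ideal, then it is a maximal abelian ideal (with respect to inclusion).
   Context: $\Phi$ is a finite irreducible crystallographic root system with basis $\Pi=\{\alpha_1,\dots,\alpha_n\}$ and positive roots $\Phi^+$. The root poset is $\Phi^+$ with $\beta\ge\gamma$ iff $\beta-\gamma$ is a nonnegative integer combination of simple roots. An abelian ideal is a subset $I\subseteq\Phi^+$ closed upward in the root poset with $(I+I)\cap\Phi=\emptyset$. *)

(* Defs.v *)
From mathcomp Require Import all_boot all_order all_algebra.
Set Implicit Arguments. Unset Strict Implicit. Unset Printing Implicit Defensive.
Import Order.TTheory GRing.Theory Num.Theory.
Local Open Scope ring_scope.

Section RootSystems.
Variables (R : realFieldType) (n : nat).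

Definition dotv (u v : 'rV[R]_n) : R := (u *m v^T) 0 0.

Definition cartan_num (b a : 'rV[R]_n) : R := 2 * dotv b a / dotv a a.

Definition reflect_root (a b : 'rV[R]_n) : 'rV[R]_n := b - cartan_num b a *: a.

(* Finite reduced crystallographic root system in the Euclidean space R^n
   (Humphreys' axioms R1--R4): Phi finite (a list), spans, 0 not a root,
   only multiples +-a of a root a are roots, closed under reflections,
   Cartan numbers are integers. *)
Definition is_root_system (Phi : seq 'rV[R]_n) : Prop :=
  [/\ (0 : 'rV[R]_n) \notin Phi,
      (forall v : 'rV[R]_n, exists c : 'rV[R]_n -> R,
          v = \sum_(a <- Phi) c a *: a),
      (forall (a : 'rV[R]_n) (c : R), a \in Phi -> c *: a \in Phi ->
          c = 1 \/ c = -1),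
      (forall a b, a \in Phi -> b \in Phi -> reflect_root a b \in Phi) &
      (forall a b, a \in Phi -> b \in Phi ->
          exists z : int, cartan_num b a = z%:~R) ].

Definition irreducible_rs (Phi : seq 'rV[R]_n) : Prop :=
  forall P : pred 'rV[R]_n,
    (forall a b, a \in Phi -> b \in Phi -> P a -> ~~ P b -> dotv a b = 0) ->
    (forall a, a \in Phi -> P a) \/ (forall a, a \in Phi -> ~~ P a).

Definition is_rs_basis (Phi : seq 'rV[R]_n) (alpha : 'I_n -> 'rV[R]_n) : Prop :=
  [/\ (forall i, alpha i \in Phi),
      (forall c : 'I_n -> R, \sum_i c i *: alpha i = 0 -> forall i, c i = 0) &
      (forall b, b \in Phi -> exists c : 'I_n -> int,
          b = \sum_i (c i)%:~R *: alpha i /\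
          ((forall i, 0 <= c i) \/ (forall i, c i <= 0))) ].

Definition pos_root (Phi : seq 'rV[R]_n) (alpha : 'I_n -> 'rV[R]_n)
    (b : 'rV[R]_n) : Prop :=
  b \in Phi /\ exists c : 'I_n -> nat, b = \sum_i (c i)%:R *: alpha i.

Definition root_le (alpha : 'I_n -> 'rV[R]_n) (g b : 'rV[R]_n) : Prop :=
  exists c : 'I_n -> nat, b - g = \sum_i (c i)%:R *: alpha i.

Definition abelian_ideal (Phi : seq 'rV[R]_n) (alpha : 'I_n -> 'rV[R]_n)
    (I : 'rV[R]_n -> Prop) : Prop :=
  [/\ (forall b, I b -> pos_root Phi alpha b),
      (forall g b, I g -> pos_root Phi alpha b -> root_le alpha g b -> I b) &
      (forall b g, I b -> I g -> b + g \notin Phi) ].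

Definition maximal_abelian_ideal (Phi : seq 'rV[R]_n) (alpha : 'I_n -> 'rV[R]_n)
    (I : 'rV[R]_n -> Prop) : Prop :=
  abelian_ideal Phi alpha I /\
  forall J : 'rV[R]_n -> Prop, abelian_ideal Phi alpha J ->
    (forall b, I b -> J b) -> forall b, J b <-> I b.

Definition M_set (Phi : seq 'rV[R]_n) (alpha : 'I_n -> 'rV[R]_n) (i : 'I_n)
    (b : 'rV[R]_n) : Prop :=
  pos_root Phi alpha b /\ root_le alpha (alpha i) b.

End RootSystems.

(* Main.v *)
Require Import Defs.
From mathcomp Require Import all_boot all_order all_algebra.
From mathcomp Require Import ring lra zify.
From Stdlib Require Import ClassicalDescription Classical.
Set Implicit Arguments. Unset Strict Implicit. Unset Printing Implicit Defensive.
Import Order.TTheory GRing.Theory Num.Theory.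
Local Open Scope ring_scope.

Lemma dotvE (R : realFieldType) (n : nat) (u v : 'rV[R]_n) :
  dotv u v = \sum_j u 0 j * v 0 j.
Proof. by rewrite /dotv !mxE; apply: eq_bigr => j _; rewrite mxE. Qed.

Lemma dotvC (R : realFieldType) (n : nat) (u v : 'rV[R]_n) : dotv u v = dotv v u.
Proof. by rewrite !dotvE; apply: eq_bigr => j _; rewrite mulrC. Qed.

Lemma dotvDl (R : realFieldType) (n : nat) (u w v : 'rV[R]_n) :
  dotv (u + w) v = dotv u v + dotv w v.
Proof. by rewrite !dotvE -big_split; apply: eq_bigr => j _; rewrite mxE mulrDl. Qed.

Lemma dotvZl (R : realFieldType) (n : nat) (a : R) (u v : 'rV[R]_n) :
  dotv (a *: u) v = a * dotv u v.
Proof. by rewrite !dotvE mulr_sumr; apply: eq_bigr => j _; rewrite mxE mulrA. Qed.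

Lemma dotvNl (R : realFieldType) (n : nat) (u v : 'rV[R]_n) :
  dotv (- u) v = - dotv u v.
Proof. by rewrite -scaleN1r dotvZl mulN1r. Qed.

Lemma dotvBl (R : realFieldType) (n : nat) (u w v : 'rV[R]_n) :
  dotv (u - w) v = dotv u v - dotv w v.
Proof. by rewrite dotvDl dotvNl. Qed.

Lemma dotvDr (R : realFieldType) (n : nat) (u w v : 'rV[R]_n) :
  dotv v (u + w) = dotv v u + dotv v w.
Proof. by rewrite !(dotvC v) dotvDl. Qed.
Lemma dotvZr (R : realFieldType) (n : nat) (a : R) (u v : 'rV[R]_n) :
  dotv v (a *: u) = a * dotv v u.
Proof. by rewrite !(dotvC v) dotvZl. Qed.
Lemma dotvNr (R : realFieldType) (n : nat) (u v : 'rV[R]_n) :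
  dotv v (- u) = - dotv v u.
Proof. by rewrite !(dotvC v) dotvNl. Qed.
Lemma dotvBr (R : realFieldType) (n : nat) (u w v : 'rV[R]_n) :
  dotv v (u - w) = dotv v u - dotv v w.
Proof. by rewrite !(dotvC v) dotvBl. Qed.

Lemma dotv_ge0 (R : realFieldType) (n : nat) (u : 'rV[R]_n) : 0 <= dotv u u.
Proof. by rewrite dotvE; apply: sumr_ge0 => j _; rewrite -expr2 sqr_ge0. Qed.

Lemma dotv_eq0 (R : realFieldType) (n : nat) (u : 'rV[R]_n) : dotv u u = 0 -> u = 0.
Proof.
rewrite dotvE => /eqP; rewrite psumr_eq0 => [/allP H|j _]; last by rewrite -expr2 sqr_ge0.
apply/rowP => j; rewrite mxE.
have := H j (mem_index_enum j); rewrite /= -expr2 sqrf_eq0 => /eqP.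
have -> : (0 : 'I_1) = ord0 by apply/val_inj.
by [].
Qed.

Lemma dotv_gt0 (R : realFieldType) (n : nat) (u : 'rV[R]_n) : u != 0 -> 0 < dotv u u.
Proof.
move=> u0; rewrite lt_def dotv_ge0 andbT; apply/eqP => H.
by move: u0; rewrite (dotv_eq0 H) eqxx.
Qed.

Lemma cs_eq (R : realFieldType) (n : nat) (u v : 'rV[R]_n) : v != 0 ->
  dotv u u * dotv v v <= dotv u v ^+ 2 -> u = (dotv u v / dotv v v) *: v.
Proof.
move=> v0 H; have vp := dotv_gt0 v0.
set t := dotv u v / dotv v v.
have E : dotv (u - t *: v) (u - t *: v) = dotv u u - 2 * t * dotv u v + t ^+ 2 * dotv v v.
  rewrite !dotvBl !dotvBr !dotvZl !dotvZr (dotvC v u); ring.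
have E2 : t ^+ 2 * dotv v v = t * dotv u v.
  by rewrite /t; field; rewrite gt_eqF.
have : dotv (u - t *: v) (u - t *: v) <= 0.
  rewrite E E2.
  have K : (dotv u u - 2 * t * dotv u v + t * dotv u v) * dotv v v
      = dotv u u * dotv v v - dotv u v ^+ 2 by rewrite /t; field; rewrite gt_eqF.
  rewrite -(pmulr_lle0 _ vp) K; lra.
move=> Hle; have : dotv (u - t *: v) (u - t *: v) = 0.
  by apply/eqP; rewrite eq_le Hle dotv_ge0.
by move/dotv_eq0/eqP; rewrite subr_eq0 => /eqP.
Qed.

Lemma coef_uniq (R : realFieldType) (n : nat) (alpha : 'I_n -> 'rV[R]_n) :
  (forall c : 'I_n -> R, \sum_i c i *: alpha i = 0 -> forall i, c i = 0) ->
  forall x y : 'I_n -> R, \sum_i x i *: alpha i = \sum_i y i *: alpha i ->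
  forall k, x k = y k.
Proof.
move=> Hind x y E k; apply/eqP; rewrite -subr_eq0; apply/eqP.
apply: (Hind (fun k => x k - y k)).
under eq_bigr do rewrite scalerBl.
by rewrite sumrB E subrr.
Qed.

Lemma sum_delta (R : realFieldType) (n : nat) (alpha : 'I_n -> 'rV[R]_n) i :
  \sum_k ((k == i)%:R : R) *: alpha k = alpha i.
Proof.
rewrite (bigD1 i) //= eqxx scale1r big1 ?addr0 // => k /negbTE ->.
by rewrite scale0r.
Qed.

Lemma Mof (R : realFieldType) (n : nat) (Phi : seq 'rV[R]_n)
    (alpha : 'I_n -> 'rV[R]_n) (i : 'I_n) :
  is_rs_basis Phi alpha -> forall z (x : 'I_n -> R), z \in Phi ->
  z = \sum_k x k *: alpha k -> 1 <= x i -> M_set Phi alpha i z.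
Proof.
case=> _ Hind Hsign z x zP zE xi.
have [c [cE cs]] := Hsign z zP.
have xc := coef_uniq Hind (etrans (esym zE) cE).
move: xi; rewrite xc ler1z => ci.
case: cs => cs; last by have := cs i; lia.
split.
  split => //; exists (fun k => `|c k|%N).
  by rewrite cE; apply: eq_bigr => k _; rewrite natr_absz ger0_norm.
exists (fun k => `|c k - (k == i)%:Z|%N).
rewrite cE -(sum_delta alpha i) -sumrB; apply: eq_bigr => k _.
rewrite -scalerBl natr_absz ger0_norm; last first.
  by have := cs k; case: eqP => [->|]; lia.
by rewrite intrB.
Qed.

Lemma Mcoef (R : realFieldType) (n : nat) (Phi : seq 'rV[R]_n)
    (alpha : 'I_n -> 'rV[R]_n) (i : 'I_n) :
  is_rs_basis Phi alpha -> forall z, M_set Phi alpha i z ->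
  exists x : 'I_n -> R, z = \sum_k x k *: alpha k /\ 1 <= x i.
Proof.
case=> _ Hind _ z [_ [d dE]].
exists (fun k => (d k)%:R + (k == i)%:R); split.
  under eq_bigr do rewrite scalerDl.
  by rewrite big_split /= -dE sum_delta subrK.
by rewrite eqxx lerDr.
Qed.

Lemma root_nz (R : realFieldType) (n : nat) (Phi : seq 'rV[R]_n) a :
  is_root_system Phi -> a \in Phi -> a != 0.
Proof. by case=> H0 _ _ _ _ aP; apply: contraNneq H0 => <-. Qed.

Lemma negPhi (R : realFieldType) (n : nat) (Phi : seq 'rV[R]_n) a :
  is_root_system Phi -> a \in Phi -> - a \in Phi.
Proof.
move=> Hrs aP; have a0 := root_nz Hrs aP.
case: Hrs => _ _ _ Hrefl _; have := Hrefl a a aP aP.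
rewrite /reflect_root /cartan_num mulfK ?gt_eqF ?dotv_gt0 //.
by rewrite scaler_nat mulr2n opprD addrA subrr sub0r.
Qed.

Lemma refl_rep (R : realFieldType) (n : nat) (alpha : 'I_n -> 'rV[R]_n) a g
   (xa xg : 'I_n -> R) :
  a = \sum_k xa k *: alpha k -> g = \sum_k xg k *: alpha k ->
  reflect_root a g = \sum_k (xg k - cartan_num g a * xa k) *: alpha k.
Proof.
move=> -> ->; rewrite /reflect_root; set t := cartan_num _ _.
rewrite scaler_sumr -sumrB; apply: eq_bigr => k _.
by rewrite scalerBl scalerA.
Qed.

Lemma dot_refl (R : realFieldType) (n : nat) (a g v : 'rV[R]_n) :
  dotv v (reflect_root a g) = dotv v g - cartan_num g a * dotv v a.
Proof. by rewrite /reflect_root dotvBr dotvZr. Qed.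

Lemma cartan_self (R : realFieldType) (n : nat) (a g : 'rV[R]_n) : a != 0 ->
  cartan_num g a * dotv a a = 2 * dotv g a.
Proof. by move=> a0; rewrite /cartan_num mulfVK // gt_eqF // dotv_gt0. Qed.

Theorem lemma5p2 (R : realFieldType) (n : nat) (Phi : seq 'rV[R]_n)
    (alpha : 'I_n -> 'rV[R]_n) (i : 'I_n) :
  is_root_system Phi -> irreducible_rs Phi -> is_rs_basis Phi alpha ->
  abelian_ideal Phi alpha (M_set Phi alpha i) ->
  maximal_abelian_ideal Phi alpha (M_set Phi alpha i).
Proof.
move=> Hrs Hirr Hbas HM; split => // J HJ HMJ b; split; last exact: HMJ.
move=> Jb; case: (classic (M_set Phi alpha i b)) => // nMb; exfalso.
have Hrs' := Hrs; case: Hrs' => H0 _ _ Hrefl Hcart.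
have Hbas' := Hbas; case: Hbas' => Halpha Hind Hsign.
case: HJ => HJpos HJup HJab.
have [bP [e be]] := HJpos b Jb.
have xbi : (e i)%:R = 0 :> R.
  case: (e i =P 0%N) => [->|/eqP ei] //; exfalso; apply: nMb.
  by apply: (Mof Hbas bP be); rewrite ler1n lt0n.
have b0 := root_nz Hrs bP.
have Mphi g : M_set Phi alpha i g -> g \in Phi by case=> [[]].
have sgn g : M_set Phi alpha i g -> 0 <= dotv b g.
  move=> Mg; rewrite leNgt; apply/negP => neg.
  have gP := Mphi g Mg; have g0 := root_nz Hrs gP.
  have [xg [gE xgi]] := Mcoef Hbas Mg.
  have [z1 Hz1] := Hcart b g bP gP.
  have [z2 Hz2] := Hcart g b gP bP.
  have nab : b + g \notin Phi := HJab b g Jb (HMJ g Mg).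
  have D1 := dotv_gt0 b0; have D2 := dotv_gt0 g0.
  have c1 := cartan_self g b0; have c2 := cartan_self b g0.
  rewrite Hz1 in c1; rewrite Hz2 in c2.
  have s1 : dotv g b = dotv b g := dotvC g b.
  have z1n : z1 < 0.
    rewrite -(ltrz0 R); rewrite s1 in c1; nra.
  have z2n : z2 < 0.
    rewrite -(ltrz0 R); nra.
  case: (z1 =P -1) => [E1|/eqP N1].
    have := Hrefl b g bP gP; rewrite /reflect_root Hz1 E1 scaleN1r opprK addrC.
    by rewrite (negbTE nab).
  case: (z2 =P -1) => [E2|/eqP N2].
    have := Hrefl g b gP bP; rewrite /reflect_root Hz2 E2 scaleN1r opprK.
    by rewrite (negbTE nab).
  have l1 : (z1%:~R : R) <= -2.
    by rewrite -[-2 : R]/((-2 : int)%:~R) ler_int; lia.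
  have l2 : (z2%:~R : R) <= -2.
    by rewrite -[-2 : R]/((-2 : int)%:~R) ler_int; lia.
  have cs : dotv g g * dotv b b <= dotv g b ^+ 2.
    rewrite s1 in c1; rewrite s1 expr2.
    have pq : 4 <= (z1%:~R : R) * z2%:~R.
      have h : 0 <= (-2 - (z1%:~R : R)) * (-2 - z2%:~R) by apply: mulr_ge0; lra.
      lra.
    have : 4 * (dotv g g * dotv b b) <= (z1%:~R * dotv b b) * (z2%:~R * dotv g g).
      have : 0 <= ((z1%:~R : R) * z2%:~R - 4) * (dotv g g * dotv b b).
        by apply: mulr_ge0; [lra | apply: mulr_ge0; lra].
      lra.
    rewrite c1 c2. nra.
  have gt := cs_eq b0 cs.
  set t := dotv g b / dotv b b in gt.
  have : xg i = t * (e i)%:R.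
    apply: (coef_uniq Hind (x := xg) (y := fun k => t * (e k)%:R)).
    rewrite -gE gt be scaler_sumr; apply: eq_bigr => k _.
    by rewrite scalerA.
  by rewrite xbi mulr0 => E; move: xgi; rewrite E ler10.
have orth g : M_set Phi alpha i g -> dotv b g = 0.
  move=> Mg; have gP := Mphi g Mg.
  have [xg [gE xgi]] := Mcoef Hbas Mg.
  have g'P := Hrefl b g bP gP.
  have Mg' : M_set Phi alpha i (reflect_root b g).
    apply: (Mof Hbas g'P (refl_rep be gE)).
    by rewrite /= xbi mulr0 subr0.
  have := sgn _ Mg'; rewrite dot_refl.
  have := sgn _ Mg.
  have c1 := cartan_self g b0; rewrite (dotvC g b) in c1.
  move=> h1; rewrite c1 => h2; apply/eqP; rewrite eq_le h1 andbT; lra.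
pose Q x := forall g, M_set Phi alpha i g -> dotv x g = 0.
pose Pb x := if excluded_middle_informative (Q x) then true else false.
have PbP x : Pb x = true <-> Q x.
  by rewrite /Pb; case: excluded_middle_informative.
have Mai : M_set Phi alpha i (alpha i).
  apply: (Mof Hbas (Halpha i) (esym (sum_delta alpha i))).
  by rewrite eqxx.
case: (Hirr Pb).
- move=> a y aP yP /PbP Qa nPy.
  have [c [yE cs]] := Hsign y yP.
  have y0 := root_nz Hrs yP.
  case: (c i =P 0) => [ci|/eqP ci].
    case: (classic (dotv a y = 0)) => // nz; exfalso.
    move: nPy; suff : Pb y = true by move=> ->.
    apply/PbP => g Mg; have gP := Mphi g Mg.
    have [xg [gE xgi]] := Mcoef Hbas Mg.
    have Mg' : M_set Phi alpha i (reflect_root y g).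
      apply: (Mof Hbas (Hrefl y g yP gP) (refl_rep yE gE)).
      by rewrite /= ci mulr0 subr0.
    have := Qa _ Mg'; rewrite dot_refl (Qa _ Mg) sub0r => /eqP.
    rewrite oppr_eq0 mulf_eq0 (negbTE (introN eqP nz)) orbF => /eqP ct.
    have := cartan_self g y0; rewrite ct mul0r => /esym /eqP.
    by rewrite mulf_eq0 /= pnatr_eq0 /= dotvC => /eqP.
  case: cs => cs.
    apply: Qa; apply: (Mof Hbas yP yE).
    by rewrite ler1z; have := cs i; lia.
  have Mny : M_set Phi alpha i (- y).
    apply: (Mof Hbas (negPhi Hrs yP) (x := fun k => - (c k)%:~R)).
      by rewrite yE -sumrN; apply: eq_bigr => k _; rewrite scaleNr.
    by rewrite -intrN ler1z; have := cs i; lia.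
  by have := Qa _ Mny; rewrite dotvNr => /eqP; rewrite oppr_eq0 => /eqP.
- move=> /(_ _ (Halpha i)) /PbP /(_ _ Mai) /dotv_eq0 ai0.
  by move: H0; rewrite -ai0 Halpha.
- move=> /(_ _ bP); suff -> : Pb b = true by [].
  by apply/PbP.
Qed.
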